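(* Let $G$ be a tree with $p\ge 2$ vertices $v_1,\dots,v_p$. Then for every $i=1,\dots,p$, $\psi_i(\pm1)=(\mp1)^{p-1}$, and $\widetilde\psi(\pm1)=(p-1)(\mp1)^{p-2}$.
   Context: For a finite simple graph $G$ with vertices $v_1,\dots,v_p$, let $D=\mathrm{diag}(d(v_1),\dots,d(v_p))$ be the degree matrix and $A$ the adjacency matrix ($a_{vw}=1$ if $v,w$ adjacent, else $0$). Let $\psi(z)=\det(-zD+A)$ and, for each $i$, $\psi_i(z)=\det(-zD_i+A_i)$ where $D_i$, $A_i$ are the principal submatrices of $D$, $A$ obtained by deleting the row and column corresponding to $v_i$. For a tree, $\psi(\pm1)=0$ (known fact), and $\widetilde\psi(z):=\psi(z)/(z^2-1)$ is a polynomial. *)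

(* Defs.v *)
From mathcomp Require Import all_boot all_order all_algebra.
Set Implicit Arguments.
Unset Strict Implicit.
Unset Printing Implicit Defensive.
Import GRing.Theory Num.Theory.
Local Open Scope ring_scope.

Definition simple_graph (p : nat) (e : rel 'I_p) : Prop :=
  symmetric e /\ irreflexive e.

Definition gconnected (p : nat) (e : rel 'I_p) : Prop :=
  forall x y : 'I_p, connect e x y.

Definition acyclic (p : nat) (e : rel 'I_p) : Prop :=
  forall c : seq 'I_p, (3 <= size c)%N -> uniq c -> ~~ cycle e c.

Definition is_tree (p : nat) (e : rel 'I_p) : Prop :=
  [/\ simple_graph e, gconnected e & acyclic e].

Definition deg (p : nat) (e : rel 'I_p) (v : 'I_p) : nat := #|[pred w | e v w]|.

Definition zDA (p : nat) (e : rel 'I_p) : 'M[{poly rat}]_p :=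
  \matrix_(i, j) ((- 'X) * ((i == j)%:R * (deg e i)%:R) + (e i j)%:R).

Definition psi (p : nat) (e : rel 'I_p) : {poly rat} := \det (zDA e).

Definition psi_i (p : nat) (e : rel 'I_p) (i : 'I_p) : {poly rat} :=
  \det (row' i (col' i (zDA e))).

Definition psit (p : nat) (e : rel 'I_p) : {poly rat} :=
  psi e %/ ('X ^+ 2 - 1).

(* Main.v *)
Require Import Defs.
From mathcomp Require Import all_boot all_order all_algebra.
From mathcomp Require Import ring.
Set Implicit Arguments. Unset Strict Implicit. Unset Printing Implicit Defensive.
Import GRing.Theory Num.Theory.
Local Open Scope ring_scope.

Definition gr (R : comPzRingType) n (T : {set 'I_n}) (B : 'M[R]_n) : 'M[R]_n :=
  \matrix_(i, j) if (i \in T) || (j \in T) then (i == j)%:R else B i j.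

Lemma sign_jj (R : comPzRingType) (j : nat) : (-1) ^+ (j + j) = 1 :> R.
Proof. by rewrite -signr_odd addnn odd_double expr0. Qed.

Lemma det_row_unit (R : comPzRingType) n (B : 'M[R]_n) j a :
  (forall b, B j b = a * (j == b)%:R) -> \det B = a * \det (row' j (col' j B)).
Proof.
move=> H; rewrite (expand_det_row _ j) (bigD1 j) //= big1 ?addr0.
  by rewrite H eqxx mulr1 /cofactor sign_jj mul1r.
by move=> k /negbTE Hk; rewrite H eq_sym Hk mulr0 mul0r.
Qed.

Lemma det_col_unit (R : comPzRingType) n (B : 'M[R]_n) j a :
  (forall b, B b j = a * (b == j)%:R) -> \det B = a * \det (row' j (col' j B)).
Proof.
move=> H; rewrite (expand_det_col _ j) (bigD1 j) //= big1 ?addr0.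
  by rewrite H eqxx mulr1 /cofactor sign_jj mul1r.
by move=> k /negbTE Hk; rewrite H Hk mulr0 mul0r.
Qed.

Lemma row'_col'_gr1 (R : comPzRingType) n (B : 'M[R]_n) j :
  row' j (col' j (gr [set j] B)) = row' j (col' j B).
Proof.
apply/matrixP => a b; rewrite !mxE !inE.
by rewrite eq_sym (negbTE (neq_lift j a)) eq_sym (negbTE (neq_lift j b)).
Qed.

Lemma det_gr1 (R : comPzRingType) n (B : 'M[R]_n) j :
  \det (gr [set j] B) = \det (row' j (col' j B)).
Proof.
rewrite (@det_row_unit _ _ _ j 1) ?mul1r ?row'_col'_gr1 // => b.
by rewrite mxE inE eqxx mul1r.
Qed.

Lemma gr_gr (R : comPzRingType) n (B : 'M[R]_n) S T :
  gr T (gr S B) = gr (S :|: T) B.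
Proof.
apply/matrixP => i j; rewrite !mxE !inE.
by case: (i \in S); case: (j \in S); case: (i \in T); case: (j \in T).
Qed.

Lemma det_row_scal (R : comPzRingType) n (B : 'M[R]_n) j a :
  (forall b, B j b = a * (j == b)%:R) -> \det B = a * \det (gr [set j] B).
Proof. by move=> H; rewrite det_gr1; apply: det_row_unit. Qed.

Lemma det_col_scal (R : comPzRingType) n (B : 'M[R]_n) j a :
  (forall b, B b j = a * (b == j)%:R) -> \det B = a * \det (gr [set j] B).
Proof. by move=> H; rewrite det_gr1; apply: det_col_unit. Qed.

Lemma det_xcol (R : comPzRingType) n (B : 'M[R]_n) u v :
  u != v -> \det (xcol u v B) = - \det B.
Proof.
by move=> huv; rewrite xcolE det_mulmx det_perm perm.odd_tperm huv expr1 mulrN1.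
Qed.

Lemma det_leaf (R : comPzRingType) n (N : 'M[R]_n) v u a : u != v ->
  (forall b, N v b = a * (v == b)%:R + (u == b)%:R) ->
  (forall b, N b v = a * (b == v)%:R + (b == u)%:R) ->
  \det N = a * \det (gr [set v] N) - \det (gr [set u] (gr [set v] N)).
Proof.
move=> huv Hr Hc.
pose B1 := \matrix_(i, j) if i == v then (v == j)%:R else N i j : R.
pose B2 := \matrix_(i, j) if i == v then (u == j)%:R else N i j : R.
have -> : \det N = a * \det B1 + 1 * \det B2.
  apply: (determinant_multilinear (i0 := v)).
  - by apply/rowP => b; rewrite !mxE !eqxx Hr mul1r.
  - by apply/matrixP => i j; rewrite !mxE eq_sym (negbTE (neq_lift v i)).
  - by apply/matrixP => i j; rewrite !mxE eq_sym (negbTE (neq_lift v i)).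
have -> : gr [set v] N = gr [set v] B1.
  apply/matrixP => i j; rewrite !mxE !inE.
  by case: (i =P v) => //= ->; case: (j =P v) => //= ->.
have h1 : \det B1 = \det (gr [set v] B1).
  by rewrite (@det_row_scal _ _ B1 v 1) ?mul1r // => b; rewrite mxE eqxx mul1r.
rewrite -h1 mul1r; congr (_ + _).
pose C := xcol u v B2.
have hC : \det C = - \det B2 by apply: det_xcol.
have hvu : v != u by rewrite eq_sym.
rewrite -[\det B2]opprK -hC; congr (- _).
rewrite (@det_col_scal _ _ C u 1) ?mul1r; last first.
  move=> b; rewrite mxE perm.tpermL mxE mul1r.
  case: (b =P v) => [->|hb]; first by rewrite (negbTE huv) (negbTE hvu).
  by rewrite Hc; move/eqP/negbTE: hb => ->; rewrite mulr0 add0r.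
rewrite (@det_row_scal _ _ _ v 1) ?mul1r; last first.
  move=> b; rewrite mxE !inE mul1r (negbTE hvu) /=.
  case: (b =P u) => [->|hb] //=.
  rewrite !mxE eqxx.
  case: (b =P v) => [->|hb2]; first by rewrite perm.tpermR !eqxx.
  rewrite perm.tpermD; first last.
  - by apply/eqP => h; apply: hb2.
  - by apply/eqP => h; apply: hb.
  by rewrite eq_sym (introF eqP hb) eq_sym (introF eqP hb2).
rewrite !gr_gr; congr (\det _); apply/matrixP => i j; rewrite !mxE !inE.
case: (i =P u) => [_|hi] //; case: (i =P v) => [_|hi2] //;
case: (j =P u) => [_|hj] //; case: (j =P v) => [_|hj2] //=.
rewrite perm.tpermD //.
- by apply/eqP => h; apply: hj; rewrite h.
- by apply/eqP => h; apply: hj2; rewrite h.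
Qed.

Lemma det_row_add (R : comPzRingType) n (N M : 'M[R]_n) u a :
  (forall b, N u b = M u b + a * (u == b)%:R) -> row' u N = row' u M ->
  \det N = \det M + a * \det (gr [set u] M).
Proof.
move=> Hr Hrow.
pose C := \matrix_(i, j) if i == u then (u == j)%:R else M i j : R.
have -> : \det N = 1 * \det M + a * \det C.
  apply: (determinant_multilinear (i0 := u)).
  - by apply/rowP => b; rewrite !mxE eqxx Hr mul1r.
  - by rewrite Hrow.
  - apply/matrixP => i j; rewrite !mxE eq_sym (negbTE (neq_lift u i)).
    by move/matrixP: Hrow => /(_ i j); rewrite !mxE.
rewrite mul1r (@det_row_scal _ _ C u 1) ?mul1r; last first.
  by move=> b; rewrite mxE eqxx mul1r.
congr (_ + _ * \det _); apply/matrixP => i j; rewrite !mxE !inE.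
by case: (i =P u) => [->|] //=; rewrite eqxx.
Qed.

Definition erel p (e : rel 'I_p) (R : {set 'I_p}) : rel 'I_p :=
  [rel a b | [&& e a b, a \in R & b \in R]].

Definition connR p (e : rel 'I_p) (R : {set 'I_p}) :=
  forall x y, x \in R -> y \in R -> connect (erel e R) x y.

Lemma conn_del p (e : rel 'I_p) (hs : symmetric e) (R : {set 'I_p}) v u :
  v \in R -> (forall x, x \in R -> e v x -> x = u) -> connR e R -> connR e (R :\ v).
Proof.
move=> vR hu hc x y; rewrite !inE => /andP [xv xR] /andP [yv yR].
have /connectP [q hq hy] := hc x y xR yR.
move: yv; rewrite hy; case: (shortenP hq) => q' hq' huq _ {hq q hy} yv.
have hnv : v \notin q'.
  apply/negP => hvq; move: hq' huq yv; case/splitPr: hvq => p1 p2.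
  rewrite cat_path /= => /andP [_ /andP [h1 h2]].
  move: h1 => /and3P [h1a h1b _].
  have hl : last x p1 = u by apply: hu => //; rewrite hs.
  case: p2 h2 => [|w p2] /=; first by rewrite last_cat /= eqxx.
  move=> /andP [/and3P [hvw _ wR] _].
  have hw : w = u by apply: hu.
  move=> hun _; have : uniq ((x :: p1) ++ [:: v, w & p2]) by [].
  rewrite cat_uniq => /and3P [_ hh _].
  move/negP: hh; apply; apply/hasP; exists w; first by rewrite in_cons mem_head orbT.
  rewrite hw -hl; exact: mem_last.
have hall : forall a, a \in x :: q' -> a != v.
  move=> a; rewrite inE => /orP [/eqP -> // | ha].
  by apply/eqP => h; rewrite -h ha in hnv.
apply/connectP; exists q' => //.
apply: (sub_in_path (P := mem (x :: q'))) hq'; last by apply/allP.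
move=> a b ha hb /= /and3P [hab aR bR]; rewrite /erel /= !inE hab aR bR !andbT /=.
by rewrite (hall a ha) (hall b hb).
Qed.

Lemma leaf_exists p (e : rel 'I_p) (hs : symmetric e) (hi : irreflexive e)
  (ha : acyclic e) (R : {set 'I_p}) :
  (1 < #|R|)%N -> connR e R ->
  exists v u, [/\ v \in R, u \in R, e v u & forall x, x \in R -> e v x -> x = u].
Proof.
move=> hR hc.
pose P n := [exists v : 'I_p, [exists t : n.-tuple 'I_p,
               [&& v \in R, uniq (v :: t) & path (erel e R) v t]]].
have /card_gt0P [r rR] : (0 < #|R|)%N by apply: ltnW.
have exP : exists n, P n.
  by exists 0%N; apply/existsP; exists r; apply/existsP; exists [tuple]; rewrite rR.
have ubP : forall n, P n -> (n <= p)%N.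
  move=> n /existsP [v /existsP [t /and3P [_ hu _]]].
  have := max_card (mem (v :: t)); rewrite (card_uniqP hu) card_ord /= size_tuple.
  by move/ltnW.
case: (ex_maxnP exP ubP) => N /existsP [v /existsP [t /and3P [vR hun hpath]]] hmax.
have hin : forall x, x \in R -> e v x -> x \in (t : seq 'I_p).
  move=> x xR hvx; apply/negPn/negP => hxt.
  have : P N.+1.
    apply/existsP; exists x; apply/existsP; exists [tuple of v :: t].
    rewrite xR /= hpath !andbT.
    have hun' := hun; move: hun' => /= /andP [h1 h2]; rewrite h1 h2 andbT.
    apply/andP; split; last by rewrite /erel /= hs hvx xR vR.
    rewrite inE negb_or hxt !andbT.
    by apply/eqP => h; move: hvx; rewrite h hi.
  by move/hmax; rewrite ltnn.
have [w hvw wR] : exists2 w, e v w & w \in R.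
  have : (0 < #|R :\ v|)%N by move: hR; rewrite (cardsD1 v R) vR.
  case/card_gt0P => y; rewrite !inE => /andP [yv yR].
  have /connectP [q hq hy] := hc v y vR yR.
  case: q hq hy => [|w' q] /=; first by move=> _ h; rewrite h eqxx in yv.
  by case/andP => /and3P [h1 _ h2] _ _; exists w'.
have hsub : subrel (erel e R) e by move=> a b /and3P [].
move: hun hpath hin; case: t => s _ /=.
case: s => [|u s] hun hpath hin; first by move: (hin w wR hvw).
move: hpath => /= /andP [/and3P [hvu _ uR] hpath].
exists v, u; split => // x xR hvx.
have := hin x xR hvx; rewrite inE => /orP [/eqP // | hxs].
exfalso; move: hun hpath; case/splitPr: hxs => s1 s2 hun hpath.
apply: (negP (ha (v :: rcons (u :: s1) x) _ _)).
- by rewrite /= size_rcons.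
- move: hun; rewrite -(cat1s x s2) catA cats1 => hun.
  have : uniq ((v :: rcons (u :: s1) x) ++ s2) by [].
  by rewrite cat_uniq => /and3P [].
- rewrite /cycle rcons_path last_rcons hs hvx andbT /= hvu /=.
  move: hpath; rewrite cat_path => /andP [h1 /= /andP [h2 _]].
  rewrite rcons_path (sub_path hsub h1) /=; exact: hsub h2.
Qed.

Definition base p (e : rel 'I_p) (c : 'I_p -> nat) : 'M[{poly rat}]_p :=
  \matrix_(i, j) ((- 'X) * ((i == j)%:R * (c i)%:R) + (e i j)%:R).
Definition F p (e : rel 'I_p) (S : {set 'I_p}) c := gr S (base e c).
Definition degR p (e : rel 'I_p) (R : {set 'I_p}) k := #|[set w in R | e k w]|.

Lemma F_ext p (e : rel 'I_p) (S : {set 'I_p}) (c : 'I_p -> nat) c' :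
  (forall k, k \notin S -> c k = c' k) -> F e S c = F e S c'.
Proof.
move=> H; apply/matrixP => i j; rewrite !mxE.
by case hi: (i \in S) => //=; case: (j \in S) => //=; rewrite H ?hi.
Qed.

Lemma F_leaf p (e : rel 'I_p) (hs : symmetric e) (S : {set 'I_p}) (c : 'I_p -> nat) v u :
  v \notin S -> u \notin S -> u != v -> e v u ->
  (forall x, x \notin S -> e v x -> x = u) -> c v = 1%N ->
  \det (F e S c) = - 'X * \det (F e (S :|: [set v]) c)
                   - \det (F e (S :|: [set v] :|: [set u]) c).
Proof.
move=> vS uS huv hvu hu hc.
have hev : forall b, b \notin S -> e v b = (u == b).
  move=> b hb; case h: (e v b); first by rewrite (hu b hb h) eqxx.
  by apply/esym/eqP => hb'; rewrite -hb' hvu in h.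
rewrite /F -!gr_gr; apply: det_leaf => // b; rewrite !mxE.
- case hb: (b \in S); rewrite (negbTE vS) /=.
    have hvb : (v == b) = false by apply/eqP => h; rewrite h hb in vS.
    have hub : (u == b) = false by apply/eqP => h; rewrite h hb in uS.
    by rewrite hvb hub mulr0 add0r.
  by rewrite hc mulr1 hev ?hb.
- case hb: (b \in S); rewrite (negbTE vS) /=.
    have hvb : (b == v) = false by apply/eqP => h; rewrite -h hb in vS.
    have hub : (b == u) = false by apply/eqP => h; rewrite -h hb in uS.
    by rewrite hvb hub mulr0 add0r.
  rewrite hs hev ?hb // eq_sym.
  by rewrite (eq_sym b u); case: (v =P b) => [<-|_]; rewrite ?hc ?mulr1 ?mul0r.
Qed.

Lemma F_isol p (e : rel 'I_p) (S : {set 'I_p}) (c : 'I_p -> nat) v :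
  v \notin S -> (forall x, x \notin S -> ~~ e v x) ->
  \det (F e S c) = (- 'X * (c v)%:R) * \det (F e (S :|: [set v]) c).
Proof.
move=> vS hx; rewrite /F -gr_gr; apply: det_row_scal => b; rewrite !mxE.
case hb: (b \in S); rewrite (negbTE vS) /=.
  have hvb : (v == b) = false by apply/eqP => h; rewrite h hb in vS.
  by rewrite hvb mulr0.
rewrite (negbTE (hx b (negbT hb))) addr0.
by rewrite mulrA mulrAC -!mulrA (mulrC (c v)%:R).
Qed.

Lemma F_weight p (e : rel 'I_p) (S : {set 'I_p}) (c : 'I_p -> nat) c' u :
  u \notin S -> c u = (c' u).+1 -> (forall k, k \notin S -> k != u -> c k = c' k) ->
  \det (F e S c) = \det (F e S c') + (- 'X) * \det (F e (S :|: [set u]) c').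
Proof.
move=> uS hcu hk; rewrite /F -gr_gr; apply: det_row_add.
  move=> b; rewrite !mxE (negbTE uS) /=.
  case hb: (b \in S) => /=.
    have hub : (u == b) = false by apply/eqP => h; rewrite h hb in uS.
    by rewrite hub mulr0 addr0.
  rewrite hcu; case: (u =P b) => _; rewrite ?mul1r ?mul0r ?mulr0 ?addr0 //.
  by rewrite -addn1 natrD mulrDr addrAC.
apply/matrixP => i j; rewrite !mxE.
case hi: (lift u i \in S) => //=; case: (j \in S) => //=.
by rewrite hk ?hi // eq_sym neq_lift.
Qed.

Lemma setC_del p (A : {set 'I_p}) x : ~: (A :\ x) = ~: A :|: [set x].
Proof. by rewrite setDE setCI setCK. Qed.

Lemma setDDC p (A : {set 'I_p}) x y : A :\ x :\ y = A :\ y :\ x.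
Proof. by apply/setP => z; rewrite !inE andbCA. Qed.

Lemma main p (e : rel 'I_p) (hs : symmetric e) (hi : irreflexive e) (ha : acyclic e) n :
  forall R : {set 'I_p}, #|R| = n.+1 -> connR e R ->
  (forall i, i \in R ->
     (\det (F e (~: (R :\ i)) (degR e R))).[1] = (-1) ^+ n /\
     (\det (F e (~: (R :\ i)) (degR e R))).[-1] = 1) /\
  exists q, \det (F e (~: R) (degR e R)) = ('X ^+ 2 - 1) * q /\
            q.[1] = n%:R * (-1) ^+ n.-1 /\ q.[-1] = n%:R.
Proof.
elim: n => [|n IH] R hR hc.
  have /cards1P [r hr] : #|R| == 1%N by rewrite hR.
  subst R; split.
    move=> i; rewrite inE => /eqP ->; rewrite setDv setC0.
    have -> : F e [set: 'I_p] (degR e [set r]) = 1%:M.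
      by apply/matrixP => a b; rewrite !mxE inE.
    by rewrite det1 !hornerC expr0.
  exists 0; rewrite mulr0 !horner0 mul0r; split => //.
  have hd : degR e [set r] r = 0%N.
    rewrite /degR; apply/eqP; rewrite cards_eq0; apply/eqP/setP => w.
    by rewrite !inE; case: (w =P r) => [->|]; rewrite ?hi ?andbF.
  rewrite /F (@det_row_scal _ _ _ r 0) ?mul0r // => b; rewrite !mxE !inE eqxx /= mul0r.
  case: (b =P r) => [->|hb] /=; first by rewrite eqxx /= hd hi mul1r mulr0 addr0.
  by move/eqP/negbTE: hb; rewrite eq_sym => ->.
have h1R : (1 < #|R|)%N by rewrite hR.
move: (leaf_exists hs hi ha h1R hc) => [v [u [vR uR hvu hu]]].
set R' := R :\ v.
have hR' : #|R'| = n.+1.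
  by move: hR; rewrite (cardsD1 v R) vR add1n => [[]].
have hc' : connR e R' := conn_del hs vR hu hc.
have [IHa [q' [hq' [hq1 hq2]]]] := IH R' hR' hc'.
have huv : u != v by apply/eqP => h; move: hvu; rewrite h hi.
have uR' : u \in R' by rewrite !inE huv.
have [Qa Qb] := IHa u uR'.
have hdeg : forall k, degR e R k = (e k v + degR e R' k)%N.
  move=> k; rewrite /degR (cardsD1 v [set w in R | e k w]) !inE vR /=.
  congr (_ + _)%N; apply: eq_card => w; rewrite !inE.
  by case: (w =P v).
have hkv : forall k, k \in R' -> k != u -> e k v = false.
  move=> k kR' kn; apply/negP => h; rewrite hs in h.
  by move: kR'; rewrite !inE => /andP [_ kR]; rewrite (hu k kR h) eqxx in kn.
have hdv : degR e R v = 1%N.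
  rewrite /degR (_ : [set w in R | e v w] = [set u]) ?cards1 //.
  apply/setP => w; rewrite !inE.
  apply/andP/eqP => [[wR h]|->]; first exact: hu.
  by rewrite uR hvu.
have hext : forall T : {set 'I_p}, (forall k, k \notin T -> k \in R' /\ k != u) ->
    F e T (degR e R) = F e T (degR e R').
  move=> T HT; apply: F_ext => k /HT [kR ku].
  by rewrite hdeg hkv.
have hP : \det (F e (~: R') (degR e R)) =
          \det (F e (~: R') (degR e R')) - 'X * \det (F e (~: (R' :\ u)) (degR e R')).
  rewrite (@F_weight _ _ _ _ (degR e R') u) ?inE ?negbK //.
  - by rewrite setC_del mulNr.
  - by rewrite huv uR.
  - by rewrite hdeg hs hvu.
  - by move=> k; rewrite inE negbK => kR ku; rewrite hdeg hkv.
have hRu : forall k, k \notin ~: (R' :\ u) -> k \in R' /\ k != u.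
  by move=> k; rewrite !inE negbK => /andP [-> ->].
set Q := \det (F e (~: (R' :\ u)) (degR e R')).
set P' := \det (F e (~: R') (degR e R')).
have hP0 : P'.[1] = 0 /\ P'.[-1] = 0.
  by rewrite /P' hq' !hornerE; split; ring.
have hFR : \det (F e (~: R) (degR e R)) = - 'X * (P' - 'X * Q) - Q.
  rewrite (@F_leaf _ _ hs _ _ v u) ?inE ?negbK //; last first.
    by move=> x; rewrite inE negbK => xR; exact: hu.
  by rewrite -!setC_del hP (hext _ hRu).
split; last first.
  exists (- 'X * q' + Q); rewrite hFR /P' hq'; split; first by ring.
  rewrite !hornerE hq1 hq2 Qa Qb; split; last by rewrite -addn1 natrD; ring.
  case: n {IH hR' hq' hq1 hq2 IHa Qa Qb hR h1R hc' hP0 hFR Q P' hP hRu hext} => [|m] /=.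
    by rewrite !expr0; ring.
  by rewrite !exprS -[m.+2]addn1 -[m.+1]addn1 !natrD; ring.
move=> i iR.
case: (i =P v) => [-> | hiv].
  rewrite hP !hornerE Qa Qb (proj1 hP0) (proj2 hP0) exprS.
  by split; ring.
case: (i =P u) => [-> | hiu].
  rewrite (@F_isol _ _ _ _ v); first last.
  - move=> x; rewrite !inE negbK => /andP [xu xR]; apply/negP => h.
    by rewrite (hu x xR h) eqxx in xu.
  - by rewrite !inE negbK eq_sym huv vR.
  rewrite hdv -setC_del setDDC (hext _ hRu) -/Q !hornerE Qa Qb exprS.
  by split; ring.
have iR' : i \in R' by rewrite !inE iR andbT; apply/eqP.
have [Aa Ab] := IHa i iR'.
rewrite (@F_leaf _ _ hs _ _ v u) ?inE ?negbK; first last.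

- by [].
- by move=> x; rewrite !inE negbK => /andP [_ xR]; exact: hu.
- by [].
- by [].
- by rewrite uR andbT eq_sym; apply/eqP => h; apply: hiu.
- by rewrite vR andbT eq_sym; apply/eqP => h; apply: hiv.
rewrite -!setC_del (setDDC R i v).
rewrite (@F_weight _ _ _ _ (degR e R') u); first last.
- by move=> k; rewrite inE negbK => /setD1P [_ kR] ku; rewrite hdeg hkv.
- by rewrite hdeg hs hvu.
- rewrite inE negbK; apply/setD1P; split => //; apply/eqP => h; apply: hiu; by rewrite h.
rewrite -setC_del (hext (~: (R' :\ i :\ u))); last first.
  by move=> k; rewrite !inE negbK => /and3P [-> _ ->].
rewrite !hornerE Aa Ab exprS.
by split; ring.
Qed.

Theorem lemma2p5 (p : nat) (e : rel 'I_p) :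
  (2 <= p)%N -> is_tree e ->
  (forall i : 'I_p,
      (psi_i e i).[1] = (-1) ^+ (p - 1) /\ (psi_i e i).[-1] = 1 ^+ (p - 1)) /\
  (psit e).[1] = (p - 1)%:R * (-1) ^+ (p - 2) /\
  (psit e).[-1] = (p - 1)%:R * 1 ^+ (p - 2).
Proof.
move=> hp [[hs hi] hcon ha].
have hR : #|[set: 'I_p]| = (p - 1).+1 by rewrite cardsT card_ord subn1 prednK // ltnW.
have hc : connR e [set: 'I_p].
  move=> x y _ _; have hE : erel e [set: 'I_p] =2 e.
    by move=> a b; rewrite /erel /= !inE !andbT.
  by rewrite (eq_connect hE); apply: hcon.
have [Ha [q [hq [hq1 hq2]]]] := main hs hi ha hR hc.
have hdeg : degR e [set: 'I_p] =1 deg e.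
  by move=> k; rewrite /degR; apply: eq_card => w; rewrite !inE.
have hbase : base e (degR e [set: 'I_p]) = zDA e.
  by apply/matrixP => a b; rewrite !mxE hdeg.
split.
  move=> i; have [h1 h2] := Ha i (in_setT i).
  rewrite expr1n; move: h1 h2; rewrite setC_del setCT set0U /F hbase det_gr1.
  by [].
have hpsi : psi e = ('X ^+ 2 - 1) * q.
  by rewrite -hq setCT /F hbase /psi; congr (\det _); apply/matrixP => a b; rewrite !mxE !inE.
have hnz : ('X ^+ 2 - 1 : {poly rat}) != 0.
  apply/negP => /eqP h; have := congr1 (horner^~ 0) h.
  by rewrite !hornerE => /eqP; rewrite oppr_eq0 oner_eq0.
have hpt : psit e = q by rewrite /psit hpsi mulKp.
rewrite hpt hq1 hq2 expr1n mulr1; split => //.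
by rewrite -subn1 -subnDA.
Qed.
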